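(* Let $d\ge 3$, let $K$ be an algebraically closed field of characteristic $p$ with $p=0$ or $p>d$, let $X_d\subset\mathbb{P}^3(K)$ be a smooth surface of degree $d$, let $L\subset X_d$ be a line, and let $P\in L$ be a point such that the Hessian quadric $V_P$ does not contain the tangent plane $\mathbb{T}_PX_d$. If $L$ is a line of the second kind, then the form $\mathfrak t_P^{(3)}$ vanishes identically on the set-theoretic intersection $\mathbb{T}_PX_d\cap V_P$.
   Context: Let $f$ be a homogeneous defining polynomial of $X_d$. For $P=(p_0:\dots:p_3)$ and $j=1,2,3$ put $\mathfrak t_P^{(j)}(z):=\sum_{0\le i_1,\dots,i_j\le 3}\frac{\partial^j f}{\partial w_{i_1}\cdots\partial w_{i_j}}(p_0,\dots,p_3)\,z_{i_1}\cdots z_{i_j}$. Then $\mathbb{T}_PX_d=V(\mathfrak t_P^{(1)})$ is the projective tangent plane of $X_d$ at $P$ and $V_P=V(\mathfrak t_P^{(2)})$ is the Hessian quadric at $P$. A line $L\subset X_d$ is called a line of the second kind if it meets every plane curve $\Gamma\in|\mathcal O_{X_d}(1)-L|$ (i.e. every curve residual to $L$ in the intersection of $X_d$ with a plane containing $L$) only in inflection points of $\Gamma$; otherwise it is of the first kind. *)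

(* Defs.v *)
From HB Require Import structures.
From mathcomp Require Import all_boot all_order all_algebra.
Set Implicit Arguments. Unset Strict Implicit. Unset Printing Implicit Defensive.
Import Order.TTheory GRing.Theory Num.Theory.
Local Open Scope ring_scope.

Notation exps n D := {ffun 'I_n -> 'I_D.+1}.
(* polynomials in n variables w_0..w_{n-1} with all partial degrees <= D *)
Notation mpoly K n D := {ffun exps n D -> K}.

Definition meval (K : comNzRingType) n D (p : mpoly K n D) (x : 'I_n -> K) : K :=
  \sum_(e : exps n D) p e * \prod_(i < n) x i ^+ e i.

Definition mevalP (K : comNzRingType) n D (p : mpoly K n D) (x : 'I_n -> {poly K})
  : {poly K} :=
  \sum_(e : exps n D) (p e)%:P * \prod_(i < n) x i ^+ e i.

Definition homogeneous (K : comNzRingType) n D (p : mpoly K n D) (d : nat) : Prop :=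
  forall e : exps n D, p e != 0 -> (\sum_(i < n) nat_of_ord (e i))%N = d.

(* e + delta_i, truncated into the bounded exponent type *)
Definition exp_incr n D (e : exps n D) (i : 'I_n) : exps n D :=
  [ffun j => if j == i then inord (e i).+1 else e j].

Definition mderiv (K : comNzRingType) n D (i : 'I_n) (p : mpoly K n D) : mpoly K n D :=
  [ffun e : exps n D => if (e i < D)%N then (e i).+1%:R * p (exp_incr e i) else 0].

Definition mderivs (K : comNzRingType) n D j (s : {ffun 'I_j -> 'I_n}) (p : mpoly K n D)
  : mpoly K n D :=
  foldr (@mderiv K n D) p [seq s k | k <- enum 'I_j].

Definition tP (K : comNzRingType) D (j : nat) (f : mpoly K 4 D) (P z : 'I_4 -> K) : K :=
  \sum_(s : {ffun 'I_j -> 'I_4}) meval (mderivs s f) P * \prod_(k < j) z (s k).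

Definition nonzero_vec (K : nzRingType) n (x : 'I_n -> K) : Prop := exists i, x i != 0.

Definition indep2 (K : nzRingType) n (a b : 'I_n -> K) : Prop :=
  forall s t : K, (forall i, s * a i + t * b i = 0) -> s = 0 /\ t = 0.

Definition indep3 (K : nzRingType) n (a b c : 'I_n -> K) : Prop :=
  forall s t u : K, (forall i, s * a i + t * b i + u * c i = 0) -> [/\ s = 0, t = 0 & u = 0].

Definition smooth_surface (K : comNzRingType) D (f : mpoly K 4 D) : Prop :=
  forall x : 'I_4 -> K, nonzero_vec x -> meval f x = 0 ->
    ~ (forall i, meval (mderiv i f) x = 0).

Definition line_on (K : comNzRingType) D (f : mpoly K 4 D) (a b : 'I_4 -> K) : Prop :=
  indep2 a b /\ forall s t : K, meval f (fun i => s * a i + t * b i) = 0.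

Definition vec3 (K : Type) (s t u : K) : 'I_3 -> K := fun k => nth s [:: s; t; u] k.

(* Let L = <a,b> ⊂ V(f).  For every plane Π = <a,b,c> ⊇ L, with plane
   coordinates (s:t:u) (so that L = {u = 0}), the residual curve Γ ⊂ Π is
   V(h), where f(s a + t b + u c) = u * h(s,t,u).  A point Q ∈ Γ is an
   inflection point of Γ if some line through Q (direction v, independent of
   Q) meets Γ at Q with intersection multiplicity >= 3, i.e. 'X^3 divides
   h(Q + X v) (this includes the case that the line lies in Γ).
   L is of the second kind if every point of L ∩ Γ is an inflection point of Γ,
   for every such Γ. *)
Definition second_kind (K : fieldType) D (f : mpoly K 4 D) (a b : 'I_4 -> K) : Prop :=
  forall c : 'I_4 -> K, indep3 a b c ->
  forall h : mpoly K 3 D,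
    (forall s t u : K,
        meval f (fun i => s * a i + t * b i + u * c i) = u * meval h (vec3 s t u)) ->
    forall s t : K, nonzero_vec (vec3 s t 0) -> meval h (vec3 s t 0) = 0 ->
      exists v : 'I_3 -> K, indep2 (vec3 s t 0) v /\
        ('X^3 %| mevalP h (fun k => (vec3 s t 0 k)%:P + v k *: 'X))%R.

(* Main.v *)
Require Import Defs.
From HB Require Import structures.
From mathcomp Require Import all_boot all_order all_algebra.
From mathcomp Require Import ring zify.
From Stdlib Require Import Classical.
Import Order.TTheory GRing.Theory Num.Theory.
Local Open Scope ring_scope.

Set Implicit Arguments. Unset Strict Implicit. Unset Printing Implicit Defensive.


Section Gen.
Variable K : closedFieldType.

Lemma poly_vanish (p : {poly K}) : (forall x, p.[x] = 0) -> p = 0.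
Proof.
move=> H; apply/eqP; apply/negP => /negP pn0.
have hs : size (p * 'X - 1) != 1%N.
  have h1 : (size (- (1 : {poly K}))%R < size (p * 'X)%R)%N.
    by rewrite size_polyN size_polyC oner_neq0 size_mulX // ltnS lt0n size_poly_eq0.
  by rewrite size_polyDl // size_mulX // eqSS size_poly_eq0.
case/closed_rootP: hs => x /rootP.
by rewrite hornerD hornerN hornerM H mul0r hornerC sub0r => /eqP; rewrite oppr_eq0 oner_eq0.
Qed.

Lemma poly_eq_pt (p q : {poly K}) : (forall x, p.[x] = q.[x]) -> p = q.
Proof.
move=> H; apply/eqP; rewrite -subr_eq0; apply/eqP/poly_vanish => x.
by rewrite hornerD hornerN H subrr.
Qed.

Lemma poly_eq_pt1 (p q : {poly K}) (al : K) :
  (forall x, 1 + al * x != 0 -> p.[x] = q.[x]) -> p = q.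
Proof.
move=> H.
have: (p - q) * (1 + al *: 'X) = 0.
  apply: poly_vanish => x; rewrite hornerM.
  have [hx|hx] := eqVneq (1 + al * x) 0.
    by rewrite [X in _ * X]hornerD hornerC hornerZ hornerX hx mulr0.
  by rewrite hornerD hornerN H // subrr mul0r.
move/eqP; rewrite mulf_eq0 subr_eq0 => /orP [/eqP //|].
move/eqP/(congr1 (fun r : {poly K} => r.[0])).
by rewrite hornerD hornerC hornerZ hornerX mulr0 addr0 => /eqP; rewrite horner0 oner_eq0.
Qed.
End Gen.

Section Meval.
Variable R : comNzRingType.

Lemma meval_ext n D (p : mpoly R n D) x y : (forall i, x i = y i) -> meval p x = meval p y.
Proof. by move=> H; apply: eq_bigr => e _; congr (_ * _); apply: eq_bigr => i _; rewrite H. Qed.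

Lemma meval_hom n D (p : mpoly R n D) d x l : homogeneous p d ->
  meval p (fun i => l * x i) = l ^+ d * meval p x.
Proof.
move=> hp; rewrite /meval mulr_sumr; apply: eq_bigr => e _.
have [->|pe] := eqVneq (p e) 0; first by rewrite !mul0r mulr0.
under eq_bigr do rewrite exprMn.
by rewrite big_split /= prodrXr (hp e pe) mulrCA.
Qed.
End Meval.


Section Deriv.
Variable R : comNzRingType.

Lemma deriv_prod_seq (I : eqType) (r : seq I) (F : I -> {poly R}) : uniq r ->
  (\prod_(i <- r) F i)^`() = \sum_(i <- r) (F i)^`() * \prod_(j <- r | j != i) F j.
Proof.
elim: r => [|a r IH] /=; first by rewrite !big_nil derivC.
case/andP=> anr ur.
rewrite !big_cons derivM IH // eqxx /= mulr_sumr; congr (_ + _).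
  congr (_ * _); rewrite [RHS]big_seq_cond [LHS]big_seq; apply: eq_bigl => j.
  by case: (boolP (j \in r)) => //= jr; apply/esym/eqP => ja; rewrite -ja jr in anr.
rewrite [LHS]big_seq [RHS]big_seq; apply: eq_bigr => i ir.
rewrite big_cons.
have -> : (a != i) by apply/eqP => ai; rewrite ai ir in anr.
by rewrite mulrCA.
Qed.

Lemma deriv_prod (I : finType) (F : I -> {poly R}) :
  (\prod_i F i)^`() = \sum_i (F i)^`() * \prod_(j | j != i) F j.
Proof. by rewrite deriv_prod_seq // index_enum_uniq. Qed.

Definition line n (x w : 'I_n -> R) : 'I_n -> {poly R} := fun i => (x i)%:P + w i *: 'X.

Definition Dw n D (w : 'I_n -> R) (p : mpoly R n D) : mpoly R n D :=
  [ffun e => \sum_i w i * mderiv i p e].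

Definition exp_decr n D (e : exps n D) (i : 'I_n) : exps n D :=
  [ffun j => if j == i then inord (e i).-1 else e j].

Definition mono n D (q : 'I_n -> {poly R}) (e : exps n D) := \prod_i q i ^+ e i.

Lemma deriv_mono n D (x w : 'I_n -> R) (e : exps n D) :
  (mono (line x w) e)^`() = \sum_i (w i * (e i)%:R)%:P * mono (line x w) (exp_decr e i).
Proof.
rewrite /mono deriv_prod; apply: eq_bigr => i _.
rewrite deriv_exp /line derivD derivC derivZ derivX add0r alg_polyC.
rewrite [in RHS](bigD1 i) //= /exp_decr ffunE eqxx inordK; last first.
  by apply: leq_ltn_trans (leq_pred _) (ltn_ord _).
rewrite mulrnAl -mulrnAr -mulr_natr polyCM polyC_natr -!mulrA; congr (_ * _).
rewrite mulrA [LHS]mulrC; congr (_ * (_ * _)); apply: eq_bigr => j /negbTE ji.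
by rewrite ffunE ji.
Qed.

Lemma chain_rule n D (p : mpoly R n D) (x w : 'I_n -> R) :
  (mevalP p (line x w))^`() = mevalP (Dw w p) (line x w).
Proof.
rewrite /mevalP linear_sum /=.
transitivity (\sum_(e : exps n D) \sum_i (p e * (w i * (e i)%:R))%:P * mono (line x w) (exp_decr e i)).
  apply: eq_bigr => e _; rewrite deriv_mulC -/(mono _ e) deriv_mono mulr_sumr. idtac.
  by apply: eq_bigr => i _; rewrite mulrA -polyCM.
rewrite [LHS]exchange_big /=.
transitivity (\sum_(e : exps n D) \sum_i (w i * mderiv i p e)%:P * mono (line x w) e); last first.
  by apply: eq_bigr => e _; rewrite -/(mono _ e) -mulr_suml -raddf_sum ffunE.
rewrite [RHS]exchange_big /=; apply: eq_bigr => i _.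
rewrite (bigID (fun e : exps n D => (0 < e i)%N)) /= [X in _ + X]big1 ?addr0; last first.
  by move=> e; rewrite lt0n negbK => /eqP ->; rewrite mulr0 mulr0 polyC0 mul0r.
rewrite (reindex_onto (fun e => exp_incr e i) (fun e => exp_decr e i)) /=; last first.
  move=> e ei; apply/ffunP => j; rewrite !ffunE.
  rewrite eqxx; case: eqP => [->|] //.
  apply: val_inj; rewrite /= !inordK ?prednK // ?ltn_ord //.
  by rewrite ltnW. by rewrite ltnW.
rewrite [RHS](bigID (fun e : exps n D => (e i < D)%N)) /= [X in _ + X]big1 ?addr0; last first.
  by move=> e; rewrite /mderiv ffunE => /negbTE ->; rewrite mulr0 polyC0 mul0r.
have dec : forall e : exps n D, (e i < D)%N -> exp_decr (exp_incr e i) i = e.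
  move=> e ei; apply/ffunP => j; rewrite !ffunE; case: eqP => [->|] //.
  by rewrite eqxx; apply: val_inj; rewrite /= (@inordK D (e i).+1 ei) /= inordK // ltnW.
have inc : forall e : exps n D, (e i < D)%N -> (exp_incr e i i : nat) = (e i).+1.
  by move=> e ei; rewrite ffunE eqxx inordK // ltnS.
have incD : forall e : exps n D, ~~ (e i < D)%N -> (exp_incr e i i : nat) = 0%N.
  move=> e; rewrite -leqNgt => ei; rewrite ffunE eqxx.
  have -> : (e i = D :> nat) by apply/eqP; rewrite eqn_leq ei -ltnS ltn_ord.
  by rewrite /inord /insubd insubF //= ltnn.
apply: eq_big => e.
  case: (boolP (e i < D)%N) => ei; first by rewrite inc // dec // eqxx.
  by rewrite incD.
case/andP => h1 _.
have ei : (e i < D)%N by apply: contraLR h1 => /incD ->.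
rewrite dec // inc // /mderiv ffunE ei.
by congr (_%:P * _); rewrite mulrCA; congr (_ * _); apply: mulrC.
Qed.
End Deriv.


Section Split.
Variable T : finType.

Definition fcons j (i : T) (s : {ffun 'I_j -> T}) : {ffun 'I_j.+1 -> T} :=
  [ffun k => if unlift ord0 k is Some k' then s k' else i].
Definition ftl j (s : {ffun 'I_j.+1 -> T}) : {ffun 'I_j -> T} := [ffun k => s (lift ord0 k)].

Lemma fcons0 j i (s : {ffun 'I_j -> T}) : fcons i s ord0 = i.
Proof. by rewrite ffunE unlift_none. Qed.
Lemma fconsS j i (s : {ffun 'I_j -> T}) k : fcons i s (lift ord0 k) = s k.
Proof. by rewrite ffunE liftK. Qed.

Lemma big_ffunS (R : Type) (idx : R) (op : Monoid.com_law idx) j (F : {ffun 'I_j.+1 -> T} -> R) :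
  \big[op/idx]_(s : {ffun 'I_j.+1 -> T}) F s =
  \big[op/idx]_(i : T) \big[op/idx]_(s : {ffun 'I_j -> T}) F (fcons i s).
Proof.
rewrite pair_big /=.
rewrite (reindex (fun p : T * {ffun 'I_j -> T} => fcons p.1 p.2)) //=.
exists (fun s : {ffun 'I_j.+1 -> T} => (s ord0, ftl s)).
  by move=> [i s] _ /=; rewrite fcons0; congr (_, _); apply/ffunP => k; rewrite ffunE fconsS.
move=> s _; apply/ffunP => k; rewrite ffunE.
case: unliftP => [k'|] ->; last by [].
by rewrite ffunE.
Qed.

Lemma big_ffun0 (R : Type) (idx : R) (op : Monoid.com_law idx) (F : {ffun 'I_0 -> T} -> R)
  (s0 : {ffun 'I_0 -> T}) :
  \big[op/idx]_(s : {ffun 'I_0 -> T}) F s = F s0.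
Proof.
rewrite (big_pred1 s0) //.
move=> s /=; apply/esym/eqP/ffunP => -[m hm].
by exfalso; rewrite ltn0 in hm.
Qed.
End Split.

Section Taylor.
Variable R : comNzRingType.

Lemma derivn_chain n D j (p : mpoly R n D) x w :
  (mevalP p (line x w))^`(j) = mevalP (iter j (Dw w) p) (line x w).
Proof. by elim: j => [|j IH]; rewrite ?derivn0 // derivnS IH chain_rule. Qed.

Lemma horner_mevalP n D (p : mpoly R n D) x t :
  (mevalP p x).[t] = meval p (fun i => (x i).[t]).
Proof.
rewrite /mevalP /meval horner_sum; apply: eq_bigr => e _.
rewrite hornerM hornerC horner_prod; congr (_ * _); apply: eq_bigr => i _.
by rewrite horner_exp.
Qed.

Lemma meval_line0 n D (q : mpoly R n D) x w : (mevalP q (line x w)).[0] = meval q x.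
Proof.
rewrite horner_mevalP; apply: eq_bigr => e _; congr (_ * _); apply: eq_bigr => i _.
by rewrite /line hornerD hornerC hornerZ hornerX mulr0 addr0.
Qed.

Lemma coef_taylor n D j (p : mpoly R n D) x w :
  meval (iter j (Dw w) p) x = (mevalP p (line x w))`_j *+ j`!.
Proof. by rewrite -(meval_line0 _ x w) -derivn_chain horner_coef0 coef_derivn addn0 ffactnn. Qed.

Lemma mderivs_cons n D j i (s : {ffun 'I_j -> 'I_n}) (p : mpoly R n D) :
  mderivs (fcons i s) p = mderiv i (mderivs s p).
Proof.
rewrite /mderivs enum_ordSl /= fcons0 -map_comp; congr (mderiv i (foldr _ _ _)).
by apply: eq_map => k /=; rewrite fconsS.
Qed.

Lemma iter_Dw n D j (p : mpoly R n D) w :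
  iter j (Dw w) p =
  [ffun e => \sum_(s : {ffun 'I_j -> 'I_n}) (\prod_(k < j) w (s k)) * mderivs s p e].
Proof.
elim: j => [|j IH].
  apply/ffunP => e; rewrite ffunE (big_ffun0 _ _ (ffun0 (card_ord 0) : {ffun 'I_0 -> 'I_n})) big_ord0 mul1r /mderivs enum_ord0 /=.
  done.
apply/ffunP => e; rewrite iterS IH /Dw !ffunE big_ffunS; apply: eq_bigr => i _.
rewrite /mderiv ffunE.
case: (boolP (e i < D)%N) => ei.
  rewrite ffunE mulr_sumr mulr_sumr; apply: eq_bigr => s _.
  rewrite big_ord_recl fcons0 mderivs_cons ffunE ei.
  under [in RHS]eq_bigr do rewrite fconsS.
  by ring.
rewrite mulr0 big1 // => s _; rewrite mderivs_cons ffunE (negbTE ei) mulr0 //.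
Qed.
End Taylor.


Lemma dep_lemma (F : fieldType) n (g : 'I_n -> F) (x : 'I_n -> 'I_n -> F) :
  (exists i, g i != 0) -> (forall k, \sum_i g i * x k i = 0) ->
  exists l : 'I_n -> F, (exists k, l k != 0) /\ forall i, \sum_k l k * x k i = 0.
Proof.
move=> [i0 gi0] hx.
pose M := \matrix_(k, i) x k i.
have : \det M^T == 0.
  apply/det0P; exists (\row_i g i).
    by apply/eqP => /rowP /(_ i0); rewrite !mxE; apply/eqP.
  apply/rowP => k; rewrite !mxE -[RHS](hx k); apply: eq_bigr => i _; rewrite !mxE.
  done.
rewrite det_tr => /det0P [v vn0 vM].
exists (fun k => v 0 k); split.
  apply/existsP; apply: contraR vn0 => /existsPn h; apply/eqP/rowP => k.
  by rewrite mxE; move: (h k); rewrite negbK => /eqP.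
move=> i; move/rowP: vM => /(_ i); rewrite !mxE => H; rewrite -[RHS]H; apply: eq_bigr => k _.
by rewrite /M mxE.
Qed.

Section Tay.
Variable K : comNzRingType.

Lemma meval_Dw n D (p : mpoly K n D) x w :
  meval (Dw w p) x = \sum_i w i * meval (mderiv i p) x.
Proof.
rewrite /meval; under eq_bigr do rewrite ffunE mulr_suml.
rewrite exchange_big /=; apply: eq_bigr => i _; rewrite mulr_sumr.
by apply: eq_bigr => e _; rewrite mulrA.
Qed.

Lemma coef1_line n D (p : mpoly K n D) x w :
  (mevalP p (line x w))`_1 = \sum_i w i * meval (mderiv i p) x.
Proof. by rewrite -meval_Dw -[RHS]mulr1n (coef_taylor 1). Qed.

Lemma tP_taylor D j (f : mpoly K 4 D) P w :
  tP j f P w = (mevalP f (line P w))`_j *+ j`!.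
Proof.
rewrite -coef_taylor iter_Dw /tP /meval.
under [RHS]eq_bigr do rewrite ffunE mulr_suml.
rewrite exchange_big /=; apply: eq_bigr => s _; rewrite mulr_suml.
by apply: eq_bigr => e _; ring.
Qed.
End Tay.


Section Reparam.
Variable K : closedFieldType.

Lemma dvdX_coef (p : {poly K}) k : ('X^k %| p) -> forall i, (i < k)%N -> p`_i = 0.
Proof. by case/dvdpP => q -> i ik; rewrite coefMXn ik. Qed.

Lemma coef_dvdX (p : {poly K}) k : (forall i, (i < k)%N -> p`_i = 0) -> 'X^k %| p.
Proof.
move=> H; apply/dvdpP; exists (\poly_(i < size p) p`_(i + k)); apply/polyP => i.
rewrite coefMXn; case: ltnP => ik; first by apply: H.
rewrite coef_poly subnK //; case: ltnP => // h.
by rewrite nth_default // (leq_trans h) // leq_subr.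
Qed.

Lemma horner_line n (x w : 'I_n -> K) t i : (line x w i).[t] = x i + w i * t.
Proof. by rewrite /line hornerD hornerC hornerZ hornerX. Qed.

Lemma reparam d (f : mpoly K 4 d) (P w : 'I_4 -> K) (al be : K) k :
  homogeneous f d ->
  ('X^k %| mevalP f (line P w)) ->
  'X^k %| mevalP f (line P (fun i => al * P i + be * w i)).
Proof.
move=> hom /dvdpP [R hR].
set Fc := mevalP f _.
pose m := size R.
pose lam : {poly K} := 1 + al *: 'X.
pose S : {poly K} := be ^+ k *: (lam ^+ d *
    \sum_(i < m) (R`_i * be ^+ i) *: ('X^i * lam ^+ (m - i))).
have claim : Fc * lam ^+ (k + m) = S * 'X^k.
  apply: (poly_eq_pt1 (al := al)) => x lx.
  set l := 1 + al * x in lx.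
  have hl : lam.[x] = l by rewrite /lam hornerD hornerC hornerZ hornerX.
  set y := be * x / l.
  have hFc : Fc.[x] = l ^+ d * (mevalP f (line P w)).[y].
    rewrite !horner_mevalP -meval_hom //; apply: meval_ext => i.
    rewrite !horner_line /y mulrDr mulrCA [X in w i * X]mulrC divfK // /l; ring.
  rewrite hR hornerM in hFc.
  have hA : l ^+ m * R.[y] = \sum_(i < m) R`_i * be ^+ i * (x ^+ i * l ^+ (m - i)).
    rewrite horner_coef mulr_sumr; apply: eq_bigr => i _.
    have -> : l ^+ m = l ^+ (m - i) * l ^+ i by rewrite -exprD subnK // ltnW.
    have hy : y * l = be * x by rewrite /y divfK.
    transitivity (R`_i * (y * l) ^+ i * l ^+ (m - i)); first by rewrite [(y * l) ^+ i]exprMn; ring.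
    by rewrite hy exprMn; ring.
  have hB : l ^+ k * y ^+ k = be ^+ k * x ^+ k.
    by rewrite -exprMn mulrC /y divfK // exprMn.
  rewrite !hornerE -/l hFc horner_sum.
  transitivity (l ^+ d * (l ^+ k * y ^+ k) * (l ^+ m * R.[y])); first by rewrite exprD hornerXn; ring.
  rewrite hA hB.
  transitivity (be ^+ k * l ^+ d * (\sum_(i < m) R`_i * be ^+ i * (x ^+ i * l ^+ (m - i))) * x ^+ k).
    by ring.
  congr (_ * _ * _); apply: eq_bigr => i _.
  by rewrite hornerZ hornerM hornerXn horner_exp hl.
have cop : coprimep ('X^k) (lam ^+ (k + m)).
  apply: coprimep_expl; apply: coprimep_expr.
  by rewrite coprimep_sym coprimepX /root /lam !hornerE oner_neq0.
rewrite -(Gauss_dvdpl _ cop) claim; exact: dvdp_mull (dvdpp _).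
Qed.
End Reparam.


Section Hom3.
Variable K : comNzRingType.
Notation R3 := {poly {poly {poly K}}}.

Definition hom3 (n : nat) (G : R3) := forall i j k : nat, (i + j + k != n)%N -> G`_i`_j`_k = 0.

Lemma hom3_0 n : hom3 n 0.
Proof. by move=> i j k _; rewrite !coef0. Qed.

Lemma hom3_add n G1 G2 : hom3 n G1 -> hom3 n G2 -> hom3 n (G1 + G2).
Proof. by move=> h1 h2 i j k h; rewrite !coefD h1 // h2 // addr0. Qed.

Lemma hom3_mul n1 n2 G1 G2 : hom3 n1 G1 -> hom3 n2 G2 -> hom3 (n1 + n2) (G1 * G2).
Proof.
move=> h1 h2 i j k hne.
rewrite coefM !coef_sum big1 // => i1 _.
rewrite coefM coef_sum big1 // => j1 _.
rewrite coefM big1 // => k1 _.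
have [e1|e1] := eqVneq (i1 + j1 + k1)%N n1; last by rewrite h1 // mul0r.
rewrite h2 ?mulr0 //.
have := ltn_ord i1; have := ltn_ord j1; have := ltn_ord k1.
move: hne => /eqP hne ? ? ?; apply/eqP => e2; apply: hne; lia.
Qed.

Lemma hom3_1 : hom3 0 1.
Proof.
move=> i j k; rewrite coef1; case: i => [|i] /=; last by rewrite !coef0.
rewrite coef1; case: j => [|j] /=; last by rewrite !coef0.
by rewrite coef1; case: k.
Qed.

Lemma hom3_exp n G m : hom3 n G -> hom3 (n * m) (G ^+ m).
Proof.
move=> h; elim: m => [|m IH]; first by rewrite muln0 expr0; exact: hom3_1.
by rewrite exprS mulnS; apply: hom3_mul.
Qed.

Lemma hom3_C x : hom3 0 (x%:P%:P%:P).
Proof.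
move=> i j k; rewrite coefC; case: i => [|i] /=; last by rewrite !coef0.
rewrite coefC; case: j => [|j] /=; last by rewrite !coef0.
by rewrite coefC; case: k.
Qed.

Lemma hom3_S : hom3 1 'X.
Proof.
move=> i j k; rewrite coefX; case: i => [|[|i]] /=; rewrite ?coef0 //.
rewrite coef1; case: j => [|j] /=; last by rewrite !coef0.
by rewrite coef1; case: k.
Qed.

Lemma hom3_T : hom3 1 ('X : {poly {poly K}})%:P.
Proof.
move=> i j k; rewrite coefC; case: i => [|i] /=; last by rewrite !coef0.
rewrite coefX; case: j => [|[|j]] /=; rewrite ?coef0 //.
by rewrite coef1; case: k.
Qed.

Lemma hom3_U : hom3 1 (('X : {poly K})%:P)%:P.
Proof.
move=> i j k; rewrite coefC; case: i => [|i] /=; last by rewrite !coef0.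
rewrite coefC; case: j => [|j] /=; last by rewrite !coef0.
by rewrite coefX; case: k => [|[|k]].
Qed.
End Hom3.

Section Constr.
Variable K : closedFieldType.
Notation R3 := {poly {poly {poly K}}}.
Variables (d : nat) (f : mpoly K 4 d) (a b c : 'I_4 -> K).

Definition cst (x : K) : R3 := x%:P%:P%:P.
Definition xs (m : 'I_4) : R3 :=
  cst (a m) * 'X + cst (b m) * ('X : {poly {poly K}})%:P + cst (c m) * (('X : {poly K})%:P)%:P.
Definition G : R3 := meval [ffun e => cst (f e)] xs.
Definition ev3 (Y : R3) s t u := Y.[s%:P%:P].[t%:P].[u].

Hypothesis hom : homogeneous f d.

Lemma hom3_G : hom3 d G.
Proof.
apply: (big_ind (hom3 d)); [exact: hom3_0 | exact: hom3_add|] => e _.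
rewrite ffunE; have [fe|fe] := eqVneq (f e) 0.
  by rewrite /cst fe !polyC0 mul0r; exact: hom3_0.
suff hs : hom3 (0 + \sum_(i < 4) (e i : nat)) (cst (f e) * \prod_i xs i ^+ e i).
  by move: hs; rewrite add0n (hom fe).
apply: hom3_mul; first exact: hom3_C.
apply: (@big_ind2 nat R3 (fun n (G : R3) => hom3 n G)); [exact: hom3_1 | by move=> *; apply: hom3_mul|] => m _.
rewrite -[X in hom3 X _]mul1n; apply: hom3_exp.
rewrite /xs -[1%N]/(0 + 1)%N.
by apply: hom3_add; [apply: hom3_add|]; apply: hom3_mul;
  [exact: hom3_C|exact: hom3_S|exact: hom3_C|exact: hom3_T|exact: hom3_C|exact: hom3_U].
Qed.

Lemma evG s t u : ev3 G s t u = meval f (fun m => s * a m + t * b m + u * c m).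
Proof.
rewrite /ev3 /G /meval !horner_sum; apply: eq_bigr => e _.
rewrite ffunE !hornerM /cst !hornerC !horner_prod; congr (_ * _); apply: eq_bigr => m _.
rewrite !horner_exp /xs !hornerE.
by congr (_ ^+ _); ring.
Qed.

Lemma ev3_expand (Y : R3) s t u : hom3 d Y ->
  ev3 Y s t u = \sum_(i < d.+1) \sum_(j < d.+1) \sum_(k < d.+1)
     Y`_i`_j`_k * (s ^+ i * t ^+ j * u ^+ k).
Proof.
move=> hY.
have sz3 : forall i j, (size (Y`_i`_j)%R <= d.+1)%N.
  move=> i j; apply/leq_sizeP => k hk; apply: hY; apply/eqP => e; lia.
have sz2 : forall i, (size (Y`_i)%R <= d.+1)%N.
  move=> i; apply/leq_sizeP => j hj; apply/polyP => k; rewrite coef0.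
  apply: hY; apply/eqP => e; lia.
have sz1 : (size Y <= d.+1)%N.
  apply/leq_sizeP => i hi; apply/polyP => j; apply/polyP => k; rewrite !coef0.
  apply: hY; apply/eqP => e; lia.
rewrite /ev3 (horner_coef_wide _ sz1) !horner_sum; apply: eq_bigr => i _.
rewrite !hornerM !horner_exp !hornerC (horner_coef_wide _ (sz2 i)) !horner_sum mulr_suml.
apply: eq_bigr => j _.
rewrite !hornerM !horner_exp !hornerC (horner_coef_wide _ (sz3 i j)) mulr_suml mulr_suml.
by apply: eq_bigr => k _; ring.
Qed.

Hypothesis fline : forall s t : K, meval f (fun m => s * a m + t * b m) = 0.

Lemma G_u0 i j : G`_i`_j`_0 = 0.
Proof.
have hE : forall s t, \sum_(i < d.+1) \sum_(j < d.+1) G`_i`_j`_0 * (s ^+ i * t ^+ j) = 0.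
  move=> s t; rewrite -[RHS](fline s t).
  transitivity (ev3 G s t 0).
    rewrite ev3_expand; last exact: hom3_G.
    apply: eq_bigr => i' _; apply: eq_bigr => j' _.
    rewrite big_ord_recl /= expr0 mulr1 big1 ?addr0 // => k _.
    by rewrite expr0n /= !mulr0.
  by rewrite evG; apply: meval_ext => m; rewrite mul0r addr0.
have [hi|hi] := ltnP i d.+1; last first.
  by apply: hom3_G; apply/eqP => e; lia.
have [hj|hj] := ltnP j d.+1; last first.
  by apply: hom3_G; apply/eqP => e; lia.
pose q (i : nat) : {poly K} := \poly_(j < d.+1) G`_i`_j`_0.
have hq : forall t, (\poly_(i < d.+1) (q i).[t]) = 0.
  move=> t; apply: poly_vanish => s; rewrite horner_poly -[RHS](hE s t).
  apply: eq_bigr => i' _; rewrite /q horner_poly mulr_suml; apply: eq_bigr => j' _; ring.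
have hqi : q i = 0.
  apply: poly_vanish => t; move: (congr1 (fun p : {poly K} => p`_i) (hq t)).
  by rewrite coef_poly hi coef0.
by move: (congr1 (fun p : {poly K} => p`_j) hqi); rewrite coef_poly hj coef0.
Qed.

Definition o1 : 'I_3 := lift ord0 (ord0 : 'I_2).
Definition o2 : 'I_3 := lift ord0 (lift ord0 (ord0 : 'I_1) : 'I_2).
Definition hh : mpoly K 3 d := [ffun e : exps 3 d => G`_(e ord0)`_(e o1)`_((e o2).+1)].

Lemma meval_hh s t u : meval hh (vec3 s t u) =
  \sum_(i < d.+1) \sum_(j < d.+1) \sum_(k < d.+1) G`_i`_j`_k.+1 * (s ^+ i * t ^+ j * u ^+ k).
Proof.
rewrite /meval big_ffunS; apply: eq_bigr => i _; rewrite big_ffunS; apply: eq_bigr => j _.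
rewrite big_ffunS; apply: eq_bigr => k _.
rewrite (big_ffun0 _ _ (ffun0 (card_ord 0) : {ffun 'I_0 -> 'I_d.+1})).
rewrite ffunE /o2 /o1 !fconsS !fcons0 !big_ord_recl big_ord0 !fconsS !fcons0 /=.
by rewrite /vec3 /= mulr1 !mulrA.
Qed.

Lemma hh_id s t u : meval f (fun m => s * a m + t * b m + u * c m) = u * meval hh (vec3 s t u).
Proof.
rewrite -evG ev3_expand; last exact: hom3_G.
rewrite meval_hh mulr_sumr; apply: eq_bigr => i _; rewrite mulr_sumr; apply: eq_bigr => j _.
rewrite big_ord_recl G_u0 mul0r add0r mulr_sumr big_ord_recr /=.
rewrite (hom3_G (i:=i) (j:=j) (k:=d.+1)) ?mul0r ?mulr0 ?addr0; last by apply/eqP => e; lia.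
by apply: eq_bigr => k _; rewrite exprS; ring.
Qed.
End Constr.


Section Main.
Variable K : closedFieldType.

Lemma mevalP_ext n D (p : mpoly K n D) x y : (forall i, x i = y i) -> mevalP p x = mevalP p y.
Proof. by move=> H; apply: eq_bigr => e _; congr (_ * _); apply: eq_bigr => i _; rewrite H. Qed.

Lemma Fw_ext D (f : mpoly K 4 D) P w w' : (forall i, w i = w' i) ->
  mevalP f (line P w) = mevalP f (line P w').
Proof. by move=> H; apply: mevalP_ext => i; rewrite /line H. Qed.

Lemma horner_Fw n D (f : mpoly K n D) P w x :
  (mevalP f (line P w)).[x] = meval f (fun i => P i + w i * x).
Proof. by rewrite horner_mevalP; apply: meval_ext => i; rewrite horner_line. Qed.

Lemma coefZXM (c : K) (H : {poly K}) n : ((c *: 'X) * H)`_n.+1 = c * H`_n.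
Proof. by rewrite -scalerAl coefZ coefXM. Qed.

Lemma coefZXM0 (c : K) (H : {poly K}) : ((c *: 'X) * H)`_0 = 0.
Proof. by rewrite -scalerAl coefZ coefXM mulr0. Qed.

Lemma I3_cases (k : 'I_3) : [\/ k = ord0, k = o1 | k = o2].
Proof.
case: k => [[|[|[|m]]] hk]; first (by apply: Or31; apply: val_inj);
  first (by apply: Or32; apply: val_inj); first (by apply: Or33; apply: val_inj).
by [].
Qed.


End Main.

Unset Implicit Arguments.

Theorem lemma2p7 (K : closedFieldType) (d : nat) (f : mpoly K 4 d)
  (a b P : 'I_4 -> K) :
  (3 <= d)%N ->
  (forall p : nat, p \in [pchar K] -> (d < p)%N) ->
  f != 0 -> homogeneous f d -> smooth_surface f ->
  line_on f a b ->
  (exists s0 t0 : K, P = (fun i => s0 * a i + t0 * b i)) -> nonzero_vec P ->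
  ~ (forall z : 'I_4 -> K, tP 1 f P z = 0 -> tP 2 f P z = 0) ->
  second_kind f a b ->
  forall z : 'I_4 -> K, tP 1 f P z = 0 -> tP 2 f P z = 0 -> tP 3 f P z = 0.
Proof.
move=> hd hchar _ hom smooth [indab fline] [s0 [t0 HP]] Pnz Hnd H2k z t1z t2z.
have two : (2%:R : K) != 0.
  apply/negP => h2.
  have : (2 \in [pchar K]) by rewrite inE /= h2.
  by move/hchar; rewrite ltnNge (leq_trans _ hd).
have coef2 : forall w, tP 2 f P w = 0 -> (mevalP f (line P w))`_2 = 0.
  move=> w; rewrite tP_taylor /= -mulr_natr => /eqP; rewrite mulf_eq0 (negbTE two) orbF.
  by move/eqP.
have coef1 : forall w, tP 1 f P w = (mevalP f (line P w))`_1.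
  by move=> w; rewrite tP_taylor.
have fP : meval f P = 0 by rewrite HP; apply: fline.
have Fline : forall al be, mevalP f (line P (fun i => al * a i + be * b i)) = 0.
  move=> al be; apply: poly_eq_pt => x; rewrite horner_Fw horner0 -(fline (s0 + al * x) (t0 + be * x)).
  by apply: meval_ext => i; rewrite HP; ring.
have F0 : forall w, (mevalP f (line P w))`_0 = 0.
  by move=> w; rewrite -horner_coef0 meval_line0.
case: (classic (indep3 a b z)) => [ind3|nind3]; last first.
  have [s [t [u [H nz]]]] : exists s t u, (forall i, s * a i + t * b i + u * z i = 0) /\
      ~ [/\ s = 0, t = 0 & u = 0].
    apply: NNPP => Hn; apply: nind3 => s t u H; apply: NNPP => Hc; apply: Hn.
    by exists s, t, u.
  have u0 : u != 0.
    apply/eqP => u0; apply: nz.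
    have [-> ->] : s = 0 /\ t = 0.
      by apply: indab => i; have := H i; rewrite u0 mul0r addr0.
    by [].
  have Fz : mevalP f (line P z) = 0.
    rewrite (Fw_ext _ _ (w' := fun i => (- s / u) * a i + (- t / u) * b i)) ?Fline //.
    move=> i; have Hi := H i.
    have hz : u * z i = - (s * a i + t * b i) by apply/eqP; rewrite -addr_eq0 addrC Hi.
    have -> : z i = (u * z i) / u by field.
    by rewrite hz; field.
  by rewrite tP_taylor Fz coef0 mul0rn.
set h := hh f a b z.
have hid : forall s t u, meval f (fun m => s * a m + t * b m + u * z m) = u * meval h (vec3 s t u).
  exact: hh_id z hom fline.
set Q := vec3 s0 t0 0.
pose wv (v : 'I_3 -> K) := fun i => v ord0 * a i + v o1 * b i + v o2 * z i.
have KI : forall v, mevalP f (line P (wv v)) = (v o2 *: 'X) * mevalP h (line Q v).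
  move=> v; apply: poly_eq_pt => x.
  rewrite horner_Fw hornerM hornerZ hornerX horner_Fw.
  transitivity (meval f (fun i => (s0 + v ord0 * x) * a i + (t0 + v o1 * x) * b i + (v o2 * x) * z i)).
    by apply: meval_ext => i; rewrite HP /wv; ring.
  rewrite hid; congr (_ * _).
  by apply: meval_ext => k; case: (I3_cases k) => ->; rewrite /Q /vec3 /= ?add0r.
set e3 : 'I_3 -> K := vec3 0 0 1.
have KIz : mevalP f (line P z) = (1 *: 'X) * mevalP h (line Q e3).
  by rewrite -KI; apply: Fw_ext => i; rewrite /wv /e3 /vec3 /=; ring.
have c1 : (mevalP f (line P z))`_1 = 0 by rewrite -coef1.
have c2 : (mevalP f (line P z))`_2 = 0 by apply: coef2.
have He0 : (mevalP h (line Q e3))`_0 = 0 by move: c1; rewrite KIz coefZXM mul1r.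
have He1 : (mevalP h (line Q e3))`_1 = 0 by move: c2; rewrite KIz coefZXM mul1r.
have hQ : meval h Q = 0 by rewrite -(meval_line0 _ _ e3) horner_coef0.
have Qnz : nonzero_vec Q.
  case: Pnz => i; rewrite HP.
  have [s00|s0n] := eqVneq s0 0; last by exists ord0.
  have [t00|t0n] := eqVneq t0 0; last by exists o1.
  by rewrite s00 t00 !mul0r addr0 eqxx.
have [v [indQv dv]] := H2k z ind3 h hid s0 t0 Qnz hQ.
have Hv : forall i, (i < 3)%N -> (mevalP h (line Q v))`_i = 0 := dvdX_coef dv.
pose gam k := meval (mderiv k h) Q.
have ell : forall u, (mevalP h (line Q u))`_1 = \sum_k gam k * u k.
  by move=> u; rewrite coef1_line; apply: eq_bigr => k _; rewrite mulrC.
have gnz : exists k, gam k != 0.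
  have [z' [t1z' t2z']] : exists z', tP 1 f P z' = 0 /\ tP 2 f P z' != 0.
    apply: NNPP => Hn; apply: Hnd => z' h1; apply: NNPP => h2; apply: Hn.
    by exists z'; split => //; apply/negP => /eqP.
  pose g i := meval (mderiv i f) P.
  have tg : forall w, tP 1 f P w = \sum_i g i * w i.
    by move=> w; rewrite coef1 coef1_line; apply: eq_bigr => i _; rewrite mulrC.
  have gnz : exists i, g i != 0.
    apply: NNPP => Hn; apply: (smooth P Pnz fP) => i; apply/eqP; apply: NNPP => Hi.
    by apply: Hn; exists i; apply/negP.
  have ta : tP 1 f P a = 0.
    by rewrite coef1 (Fw_ext _ _ (w' := fun i => 1 * a i + 0 * b i)) ?Fline ?coef0 // => i; ring.
  have tb : tP 1 f P b = 0.
    by rewrite coef1 (Fw_ext _ _ (w' := fun i => 0 * a i + 1 * b i)) ?Fline ?coef0 // => i; ring.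
  pose xx (k : 'I_4) : 'I_4 -> K := match (k : nat) with 0 => a | 1 => b | 2 => z | _ => z' end.
  have hx : forall k, \sum_i g i * xx k i = 0.
    by move=> k; case: k => [[|[|[|m]]] hk] /=; rewrite -tg.
  have [l [lnz hl]] := dep_lemma gnz hx.
  have hl' : forall i, l ord0 * a i + l (lift ord0 ord0) * b i + l (lift ord0 (lift ord0 ord0)) * z i
     + l (lift ord0 (lift ord0 (lift ord0 ord0))) * z' i = 0.
    by move=> i; rewrite -(hl i) !big_ord_recl big_ord0 addr0 !addrA.
  set l0 := l ord0 in hl'; set l1 := l (lift ord0 ord0) in hl'.
  set l2 := l (lift ord0 (lift ord0 ord0)) in hl'.
  set l3 := l (lift ord0 (lift ord0 (lift ord0 ord0))) in hl'.
  have l3n : l3 != 0.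
    apply/eqP => l30.
    have [h0 h1 h2] : [/\ l0 = 0, l1 = 0 & l2 = 0].
      by apply: ind3 => i; rewrite -[RHS](hl' i) l30 mul0r addr0.
    case: lnz => -[[|[|[|[|m]]]] hk].
    - by rewrite (_ : Ordinal hk = ord0) -?/l0 ?h0 ?eqxx //; apply: val_inj.
    - by rewrite (_ : Ordinal hk = lift ord0 ord0) -?/l1 ?h1 ?eqxx //; apply: val_inj.
    - by rewrite (_ : Ordinal hk = lift ord0 (lift ord0 ord0)) -?/l2 ?h2 ?eqxx //; apply: val_inj.
    - by rewrite (_ : Ordinal hk = lift ord0 (lift ord0 (lift ord0 ord0))) -?/l3 ?l30 ?eqxx //; apply: val_inj.
    - by [].
  pose u : 'I_3 -> K := vec3 (- l0 / l3) (- l1 / l3) (- l2 / l3).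
  have zu : forall i, z' i = wv u i.
    move=> i; have H := hl' i; rewrite /wv /u /vec3 /=.
    have H' : l3 * z' i = - (l0 * a i + l1 * b i + l2 * z i).
      by apply/eqP; rewrite -addr_eq0 addrC H.
    have -> : z' i = (l3 * z' i) / l3 by field.
    by rewrite H'; field.
  have c2' : (mevalP f (line P z'))`_2 != 0.
    by apply: contra t2z' => /eqP hc; rewrite tP_taylor hc mul0rn.
  rewrite (Fw_ext _ _ zu) KI coefZXM ell in c2'.
  apply: NNPP => Hn; move: c2'; rewrite big1 ?mulr0 ?eqxx // => k _.
  have -> : gam k = 0 by apply/eqP; apply: NNPP => hk; apply: Hn; exists k; apply/negP.
  by rewrite mul0r.
pose Qe : 'I_3 -> K := fun k => Q k + e3 k.
have ellQe : (mevalP h (line Q Qe))`_1 = 0.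
  have d3 : 'X^3 %| mevalP f (line P z).
    by apply: coef_dvdX => -[|[|[|i]]] //= _; rewrite ?F0.
  have := dvdX_coef (reparam 1 1 hom d3) (isT : (2 < 3)%N).
  rewrite -(Fw_ext _ _ (w := wv Qe)); last first.
    by move=> i; rewrite /wv /Qe /Q /e3 /vec3 HP /=; ring.
  by rewrite KI coefZXM /Qe /Q /e3 /vec3 /= add0r mul1r.
pose x3 (k : 'I_3) : 'I_3 -> K := match (k : nat) with 0 => Qe | 1 => v | _ => e3 end.
have hx : forall k, \sum_i gam i * x3 k i = 0.
  move=> k; case: (I3_cases k) => -> /=; rewrite -ell //.
  exact: Hv.
have [l [lnz hl]] := dep_lemma gnz hx.
have hl' : forall i, l ord0 * Qe i + l o1 * v i + l o2 * e3 i = 0.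
  by move=> i; rewrite -(hl i) !big_ord_recl big_ord0 addr0 addrA.
set mu := l ord0 + l o2.
have mun : mu != 0.
  apply/eqP => mu0.
  have l2e : l o2 = - l ord0 by apply/eqP; rewrite -addr_eq0 addrC -/mu mu0.
  have [l0 l1] : l ord0 = 0 /\ l o1 = 0.
    apply: indQv => i; have := hl' i; rewrite /Qe l2e; move=> H; rewrite -[RHS]H /Q; ring.
  case: lnz => k; case: (I3_cases k) => ->; rewrite ?l0 ?l1 ?l2e ?l0 ?oppr0 eqxx //.
pose al := - l ord0 / mu.
pose be := - l o1 / mu.
have E : forall k, e3 k = al * Q k + be * v k.
  move=> k; have := hl' k; rewrite /Qe /al /be => H.
  have H' : mu * e3 k = - (l ord0 * Q k + l o1 * v k).
    by apply/eqP; rewrite -addr_eq0 -[X in _ == X]H /mu; apply/eqP; ring.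
  have -> : e3 k = (mu * e3 k) / mu by field.
  by rewrite H'; field.
have zE : forall i, z i = al * P i + be * wv v i.
  move=> i.
  have -> : z i = e3 ord0 * a i + e3 o1 * b i + e3 o2 * z i by rewrite /e3 /vec3 /=; ring.
  rewrite !E HP /wv /Q /vec3 /=; ring.
have d4 : 'X^4 %| mevalP f (line P (wv v)).
  apply: coef_dvdX => -[|i] hi; first by rewrite KI coefZXM0.
  by rewrite KI coefZXM Hv ?mulr0.
have := dvdX_coef (reparam al be hom d4) (isT : (3 < 4)%N).
rewrite -(Fw_ext _ _ zE) => h3.
by rewrite tP_taylor h3 mul0rn.
Qed.
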